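(* Let $A$ be a nonempty finite set of $n$ alternatives. A choice rule $C$ on $A$ is (capacity-constrained) lexicographic if and only if it satisfies capacity-filling, gross substitutes, monotonicity, and the capacity-wise weak axiom of revealed preference (CWARP).
   Context: Let $\mathcal{A}$ be the set of all nonempty subsets of $A$. A choice rule is a map $C$ assigning to each $(S,q)\in\mathcal{A}\times\{1,\dots,n\}$ a nonempty set $C(S,q)\subseteq S$ with $|C(S,q)|\le q$; write $R(S,q)=S\setminus C(S,q)$. A priority ordering is a complete, transitive, antisymmetric binary relation on $A$; a priority profile is a list $(\succ_1,\dots,\succ_n)$ of $n$ priority orderings. $C$ is lexicographic for $(\succ_1,\dots,\succ_n)$ if for every $(S,q)$, $C(S,q)$ is obtained by choosing the $\succ_1$-highest alternative in $S$, then the $\succ_2$-highest among the remaining ones, and so on, until $q$ alternatives are chosen or none is left; $C$ is lexicographic if it is lexicographic for some priority profile. Capacity-filling: $|C(S,q)|=\min\{|S|,q\}$ for all $(S,q)$. Gross substitutes: for each $(S,q)$ and $a,b\in S$ with $a\ne b$, $a\in C(S,q)$ implies $a\in C(S\setminus\{b\},q)$. Monotonicity: $C(S,q)\subseteq C(S,q+1)$ for all $S\in\mathcal{A}$, $q\in\{1,\dots,n-1\}$. For $q\in\{2,\dots,n\}$, $a$ is revealed to be preferred to $b$ at $q$ if there is $S\in\mathcal{A}$ with $a,b\notin C(S,q-1)$, $a\in C(S,q)$ and $b\in R(S,q)$. CWARP: for each $q\in\{2,\dots,n\}$ and $a,b\in A$, if $a$ is revealed to be preferred to $b$ at $q$ then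 $b$ is not revealed to be preferred to $a$ at $q$. *)

(* Defs.v *)
From mathcomp Require Import all_boot.
Set Implicit Arguments. Unset Strict Implicit. Unset Printing Implicit Defensive.

Section ChoiceRules.
Variable A : finType.

(* A choice rule is a map C : {set A} -> nat -> {set A}; only its values on
   nonempty S and capacities q in {1,...,n}, n = #|A|, matter. *)
Definition choice_rule (C : {set A} -> nat -> {set A}) : Prop :=
  forall S q, S != set0 -> 0 < q <= #|A| ->
    [/\ C S q \subset S, C S q != set0 & #|C S q| <= q].

Definition rejected (C : {set A} -> nat -> {set A}) S q := S :\: C S q.

Definition priority (r : rel A) : Prop :=
  [/\ (forall x y, r x y || r y x),
      (forall x y z, r x y -> r y z -> r x z)
    & (forall x y, r x y -> r y x -> x = y)].

Definition profile := 'I_#|A| -> rel A.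

Definition priority_profile (P : profile) : Prop := forall i, priority (P i).

(* The ordering used at step k+1 (k is 0-based); irrelevant default beyond n. *)
Definition prof_at (P : profile) (k : nat) : rel A :=
  match insub k with Some i => P i | None => fun _ _ => true end.

Definition lex_step (r : rel A) (S chosen : {set A}) : {set A} :=
  match [pick x in S :\: chosen | [forall y in S :\: chosen, r x y]] with
  | Some x => x |: chosen
  | None => chosen
  end.

Fixpoint lex_chosen (P : profile) (S : {set A}) (k : nat) : {set A} :=
  match k with
  | 0 => set0
  | k'.+1 => lex_step (prof_at P k') S (lex_chosen P S k')
  end.

Definition lexicographic_for (C : {set A} -> nat -> {set A}) (P : profile) : Prop :=
  forall S q, S != set0 -> 0 < q <= #|A| -> C S q = lex_chosen P S q.

Definition lexicographic (C : {set A} -> nat -> {set A}) : Prop :=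
  exists P : profile, priority_profile P /\ lexicographic_for C P.

Definition capacity_filling (C : {set A} -> nat -> {set A}) : Prop :=
  forall S q, S != set0 -> 0 < q <= #|A| -> #|C S q| = minn #|S| q.

Definition gross_substitutes (C : {set A} -> nat -> {set A}) : Prop :=
  forall S q, S != set0 -> 0 < q <= #|A| ->
    forall a b, a \in S -> b \in S -> a != b ->
      a \in C S q -> a \in C (S :\ b) q.

Definition monotonicity (C : {set A} -> nat -> {set A}) : Prop :=
  forall S q, S != set0 -> 0 < q <= #|A|.-1 -> C S q \subset C S q.+1.

Definition revealed_pref (C : {set A} -> nat -> {set A}) (q : nat) (a b : A) : Prop :=
  exists S, [/\ S != set0, a \notin C S q.-1, b \notin C S q.-1,
                a \in C S q & b \in rejected C S q].

Definition CWARP (C : {set A} -> nat -> {set A}) : Prop :=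
  forall q, 2 <= q <= #|A| -> forall a b,
    revealed_pref C q a b -> ~ revealed_pref C q b a.

End ChoiceRules.

(* Main.v *)
Require Import Defs.
From mathcomp Require Import all_boot zify.
Set Implicit Arguments. Unset Strict Implicit. Unset Printing Implicit Defensive.

Section Lex.
Variable A : finType.
Implicit Types (r : rel A) (S T ch : {set A}).

Lemma max_exists r T : priority r -> T != set0 ->
  exists2 x, x \in T & forall y, y \in T -> r x y.
Proof.
case=> tot tr _ /set0Pn [x0 Tx0].
case: (arg_maxnP (fun x => #|[set y in T | r x y]|) Tx0) => x xT Hmax.
exists x => // y yT; case rxy: (r x y) => //.
have ryx : r y x by move: (tot x y); rewrite rxy.
have : #|[set z in T | r x z]| < #|[set z in T | r y z]|.
  apply: proper_card; apply/properP; split.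
    apply/subsetP => z; rewrite !inE => /andP[zT rxz].
    by rewrite zT (tr _ _ _ ryx rxz).
  exists y; rewrite !inE ?yT ?rxy //=.
  by move: (tot y y); rewrite orbb.
by move=> lt; have := Hmax y yT; rewrite /= leqNgt lt.
Qed.

Lemma lex_stepP r S ch : priority r ->
  (S :\: ch = set0 /\ lex_step r S ch = ch) \/
  exists x, [/\ x \in S :\: ch, forall y, y \in S :\: ch -> r x y
              & lex_step r S ch = x |: ch].
Proof.
move=> pr; rewrite /lex_step; case: pickP => [x /andP[xD /forall_inP H]| H].
  by right; exists x; split.
left; split => //; apply/eqP; apply: contraT => /(max_exists pr) [x xD Hx].
have hx : [forall y in S :\: ch, r x y] by apply/forall_inP => y yD; apply: Hx.
by have := H x; rewrite xD hx.
Qed.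

Lemma lex_step_sub r S ch : ch \subset S -> lex_step r S ch \subset S.
Proof.
move=> sub; rewrite /lex_step; case: pickP => // x /andP[].
by rewrite inE => /andP[_ xS] _; rewrite subUset sub1set xS.
Qed.

Lemma lex_step_ext r S ch : ch \subset lex_step r S ch.
Proof. by rewrite /lex_step; case: pickP => // x _; apply: subsetUr. Qed.

Variable P : profile A.
Hypothesis hP : priority_profile P.

Lemma prof_pri k : k < #|A| -> priority (prof_at P k).
Proof. by move=> kn; rewrite /prof_at insubT. Qed.

Lemma lex_sub S k : lex_chosen P S k \subset S.
Proof. by elim: k => [|k IH] /=; [apply: sub0set | apply: lex_step_sub]. Qed.

Lemma lex_mono S k : lex_chosen P S k \subset lex_chosen P S k.+1.
Proof. exact: lex_step_ext. Qed.

Lemma lex_card S k : k <= #|A| -> #|lex_chosen P S k| = minn #|S| k.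
Proof.
elim: k => [|k IH] kn /=; first by rewrite cards0 minn0.
have sub := lex_sub S k.
case: (lex_stepP S (lex_chosen P S k) (prof_pri kn)) => [[e ->]|[x [xD _ ->]]].
  rewrite IH ?(ltnW kn) //.
  have: S \subset lex_chosen P S k by rewrite -setD_eq0 e.
  move=> sub'; have eq : lex_chosen P S k = S by apply/eqP; rewrite eqEsubset sub sub'.
  have := IH (ltnW kn); rewrite eq => h; lia.
rewrite cardsU1; move: xD; rewrite inE => /andP[xn xS]; rewrite xn.
have : #|lex_chosen P S k| < #|S|.
  by apply: proper_card; apply/properP; split => //; exists x.
rewrite IH ?(ltnW kn) //= => h; lia.
Qed.

Lemma lex_gs S b k : k <= #|A| ->
  lex_chosen P S k :\ b \subset lex_chosen P (S :\ b) k.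
Proof.
elim: k => [|k IH] kn /=; first by rewrite set0D sub0set.
have IH' := IH (ltnW kn).
set ch := lex_chosen P S k; set ch' := lex_chosen P (S :\ b) k.
have pr := prof_pri kn.
case: (lex_stepP S ch pr) => [[_ ->]|[x [xD xmax ->]]].
  exact: subset_trans IH' (lex_step_ext _ _ _).
apply/subsetP => z; rewrite !inE => /andP[zb /orP[/eqP zx| zch]]; last first.
  apply: (subsetP (lex_step_ext _ (S :\ b) ch')); apply: (subsetP IH').
  by rewrite !inE zb zch.
subst z.
case xch' : (x \in ch'); first by apply: (subsetP (lex_step_ext _ (S :\ b) ch')).
have xD' : x \in (S :\ b) :\: ch'.
  by move: xD; rewrite !inE xch' zb => /andP[_ ->].
case: (lex_stepP (S :\ b) ch' pr) => [[e _]|[y [yD ymax ->]]].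
  by move: xD'; rewrite e inE.
case: (eqVneq x y) => [<-|xy]; first by rewrite !inE eqxx.
exfalso.
have ryx := ymax x xD'.
move: yD; rewrite !inE => /andP[ych' /andP[yb yS]].
case ych : (y \in ch).
  have : y \in ch :\ b by rewrite !inE yb ych.
  by move/(subsetP IH'); rewrite (negbTE ych').
have rxy : prof_at P k x y by apply: xmax; rewrite inE ych yS.
case: pr => _ _ anti; move: xy; rewrite (anti _ _ rxy ryx) eqxx //.
Qed.

End Lex.

Section Forward.
Variable A : finType.
Variable C : {set A} -> nat -> {set A}.
Variable P : profile A.
Hypothesis hP : priority_profile P.
Hypothesis hL : lexicographic_for C P.

Lemma fwd_cf : capacity_filling C.
Proof.
move=> S q S0 /andP[q0 qn]; rewrite hL ?q0 //; exact: lex_card.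
Qed.

Lemma fwd_gs : gross_substitutes C.
Proof.
move=> S q S0 /andP[q0 qn] a b aS bS ab aC.
have Sb0 : S :\ b != set0 by apply/set0Pn; exists a; rewrite !inE ab.
rewrite hL ?q0 //; move: aC; rewrite hL ?q0 // => aC.
by apply: (subsetP (lex_gs hP S b qn)); rewrite !inE ab.
Qed.

Lemma fwd_mono : monotonicity C.
Proof.
move=> S q S0 /andP[q0 qn].
have qn' : q < #|A| by lia.
rewrite hL ?q0 ?(ltnW qn') // (hL S0) //; exact: lex_mono.
Qed.

Lemma fwd_cwarp : CWARP C.
Proof.
move=> q /andP[q2 qn] a b; case: q q2 qn => [//|q] q2 qn.
have q0 : 0 < q by lia.
have qn' : q < #|A| by lia.
have key : forall x y, revealed_pref C q.+1 x y -> prof_at P q x y /\ x != y.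
  move=> x y [S [S0 xn yn xC]].
  rewrite /rejected !inE => /andP[yC yS].
  split; last by apply: contraNneq yC => <-.
  move: xn yn xC yC => /=; rewrite !hL ?q0 ?(ltnW qn') ?qn //=.
  case: (lex_stepP S (lex_chosen P S q) (prof_pri hP qn')) => [[_ ->]|[z [zD zmax ->]]].
    by move=> /negP xn _ /xn.
  move=> xn yn; rewrite !inE (negbTE xn) (negbTE yn) !orbF => /eqP -> yz.
  by apply: zmax; rewrite inE yn.
move=> /key [rab ab] /key [rba _].
case: (prof_pri hP qn') => _ _ anti.
by move: ab; rewrite (anti _ _ rab rba) eqxx.
Qed.

End Forward.

Section Converse.
Variable A : finType.
Variable C : {set A} -> nat -> {set A}.
Hypothesis hn : 0 < #|A|.
Hypothesis hC : choice_rule C.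
Hypothesis hCF : capacity_filling C.
Hypothesis hGS : gross_substitutes C.
Hypothesis hM : monotonicity C.
Hypothesis hW : CWARP C.
Implicit Types (S T U K : {set A}) (x y z w : A).

Definition base S q : {set A} := if q <= 1 then set0 else C S q.-1.

Definition erel q : rel A := fun x y =>
  [exists S : {set A}, [&& S != set0, x \notin base S q, y \notin base S q,
                          x \in C S q & y \in S :\: C S q]].

Lemma gs_iter m T S z : 0 < m <= #|A| -> S \subset T -> z \in S ->
  z \in C T m -> z \in C S m.
Proof.
move=> Hm; move eT: #|T :\: S| => k; elim: k T eT => [|k IH] T eT sST zS zC.
  have : T \subset S by rewrite -setD_eq0 -cards_eq0 eT.
  by move=> sTS; have -> : S = T by apply/eqP; rewrite eqEsubset sST sTS.
have : 0 < #|T :\: S| by rewrite eT.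
rewrite card_gt0 => /set0Pn [b]; rewrite inE => /andP[bS bT].
have zb : z != b by apply: contraNneq bS => <-.
have T0 : T != set0 by apply/set0Pn; exists z; apply: (subsetP sST).
have zC' := hGS T0 Hm (subsetP sST z zS) bT zb zC.
apply: (IH (T :\ b)) => //.
  have : #|T :\: S| = (b \in T :\: S) + #|(T :\: S) :\ b| by apply: cardsD1.
  rewrite eT inE bS bT /= add1n => [[->]].
  by apply: eq_card => w; rewrite !inE; case: (w \in S); case: (w == b); rewrite ?andbF.
by rewrite subsetD1 sST bS.
Qed.

Lemma prune m S U : 0 < m <= #|A| -> S != set0 -> C S m \subset U ->
  U \subset S -> C U m = C S m.
Proof.
move=> Hm S0 sCU sUS.
have sub : C S m \subset C U m.
  apply/subsetP => z zC; apply: (gs_iter Hm sUS) => //; exact: (subsetP sCU).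
have U0 : U != set0.
  have [_ /set0Pn [z zC] _] := hC S0 Hm.
  by apply/set0Pn; exists z; apply: (subsetP sCU).
apply/esym/eqP; rewrite eqEcard sub /= (hCF U0 Hm) (hCF S0 Hm).
have := subset_leq_card sUS; lia.
Qed.

Lemma base_sub_C S q : S != set0 -> 0 < q <= #|A| -> base S q \subset C S q.
Proof.
move=> S0 Hq; rewrite /base; case: ifP => q1; first exact: sub0set.
have -> : C S q = C S q.-1.+1 by congr (C S _); lia.
apply: hM => //; lia.
Qed.

Lemma C_sub S q : S != set0 -> 0 < q <= #|A| -> C S q \subset S.
Proof. by move=> S0 Hq; case: (hC S0 Hq). Qed.

Lemma base_card S q : S != set0 -> 0 < q <= #|A| -> #|base S q| = minn #|S| q.-1.
Proof.
move=> S0 Hq; rewrite /base; case: ifP => q1.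
  have -> : q.-1 = 0 by lia.
  by rewrite cards0 minn0.
rewrite hCF //; lia.
Qed.

Lemma base_notin_A S q z : 0 < q <= #|A| -> z \in S -> z \notin base S q ->
  z \notin base [set: A] q.
Proof.
move=> Hq zS; rewrite /base; case: ifP => // q1.
apply: contra => zC; apply: (gs_iter _ (subsetT S)) => //; lia.
Qed.

Lemma new_elem S q : S != set0 -> 0 < q <= #|A| -> q <= #|S| ->
  exists x, x \in S :\: base S q /\ C S q = x |: base S q.
Proof.
move=> S0 Hq qS.
have sb := base_sub_C S0 Hq.
have : #|C S q :\: base S q| == 1.
  rewrite cardsD (setIidPr sb) (base_card S0 Hq) (hCF S0 Hq); apply/eqP; lia.
move/cards1P => [x ex].
have xC : x \in C S q :\: base S q by rewrite ex set11.
exists x; split.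
  move: xC; rewrite !inE => /andP[-> xC] /=.
  exact: (subsetP (C_sub S0 Hq)).
apply/setP => w; rewrite !inE.
case wb: (w \in base S q); first by rewrite orbT (subsetP sb).
rewrite orbF; move/setP: ex => /(_ w); rewrite !inE wb /=.
by move=> ->.
Qed.

Lemma small S q : S != set0 -> 0 < q <= #|A| -> #|S| < q ->
  S :\: base S q = set0 /\ C S q = base S q.
Proof.
move=> S0 Hq Sq.
have sb := base_sub_C S0 Hq.
have sC := C_sub S0 Hq.
have bS : base S q = S.
  apply/eqP; rewrite eqEcard (subset_trans sb sC) /= (base_card S0 Hq); lia.
split; first by rewrite bS setDv.
apply/eqP; rewrite eqEsubset sb bS sC //.
Qed.

Lemma erel_intro S q x y : S != set0 -> 0 < q <= #|A| ->
  x \in C S q -> x \notin base S q -> y \in S :\: C S q -> erel q x y.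
Proof.
move=> S0 Hq xC xb yD; apply/existsP; exists S; rewrite S0 xb xC yD /= andbT.
move: yD; rewrite inE => /andP[yC _]; apply: contra yC; exact: (subsetP (base_sub_C S0 Hq)).
Qed.

Lemma erel_elim q x y : erel q x y -> exists S, [/\ S != set0, x \notin base S q,
  y \notin base S q, x \in C S q & y \in S :\: C S q].
Proof.
by move=> /existsP [S /and5P[S0 xb yb xC yD]]; exists S.
Qed.

Lemma erel_neq q x y : erel q x y -> x != y.
Proof.
move=> /erel_elim [S [_ _ _ xC]]; rewrite inE => /andP[yC _].
by apply: contraNneq yC => <-.
Qed.

Lemma erel_notbase q x y : 0 < q <= #|A| -> erel q x y ->
  x \notin base [set: A] q /\ y \notin base [set: A] q.
Proof.
move=> Hq /erel_elim [S [S0 xb yb xC yD]]; split.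
  apply: (base_notin_A Hq _ xb); exact: (subsetP (C_sub S0 Hq)).
apply: (base_notin_A Hq _ yb); by move: yD; rewrite inE => /andP[].
Qed.

Lemma C1_single S x : S != set0 -> #|A| > 0 -> x \in C S 1 -> C S 1 = [set x].
Proof.
move=> S0 Hn xC.
have : #|C S 1| == 1.
  rewrite hCF ?Hn //; apply/eqP; move: S0; rewrite -card_gt0; lia.
move/cards1P => [z ez]; move: xC; rewrite ez inE => /eqP ->; done.
Qed.

Lemma erel1_pair x y : erel 1 x y -> C [set x; y] 1 = [set x].
Proof.
move=> /erel_elim [S [S0 _ _ xC]]; rewrite inE => /andP[_ yS].
have H1 : 0 < 1 <= #|A| by rewrite hn.
have xS : x \in S by apply: (subsetP (C_sub S0 H1)).
rewrite (prune H1 S0) ?(C1_single S0 hn xC).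
- by [].
- by rewrite sub1set !inE eqxx.
- by rewrite subUset !sub1set xS yS.
Qed.

Lemma erel_asym q x y : 0 < q <= #|A| -> erel q x y -> erel q y x -> False.
Proof.
move=> Hq exy eyx.
case: (leqP q 1) => q1.
  have q1' : q = 1 by lia.
  subst q; have := erel1_pair exy; rewrite setUC (erel1_pair eyx) => /setP /(_ x).
  by rewrite !inE eqxx /= (negbTE (erel_neq exy)).
have rp : forall a b, erel q a b -> revealed_pref C q a b.
  move=> a b /erel_elim [S [S0 ab bb aC bD]]; exists S.
  by move: ab bb; rewrite /base leqNgt q1 /= => ab bb; split.
have q2 : 2 <= q <= #|A| by lia.
exact: (hW q2 (rp _ _ exy) (rp _ _ eyx)).
Qed.

Lemma acyc q K : 0 < q <= #|A| -> K != set0 ->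
  (forall z, z \in K -> exists2 w, w \in K & erel q w z) -> False.
Proof.
move=> Hq K0 Hpred.
have Knb : forall z, z \in K -> z \notin base [set: A] q.
  by move=> z /Hpred [w _ ewz]; case: (erel_notbase Hq ewz).
set U := base [set: A] q :|: K.
have U0 : U != set0.
  by move: K0 => /set0Pn [z zK]; apply/set0Pn; exists z; rewrite inE zK orbT.
have T0 : [set: A] != set0 by apply/set0Pn; exists (enum_val (Ordinal hn)).
have bU : base U q = base [set: A] q.
  rewrite /base; case: ifP => // q1.
  apply: prune; [lia | exact: T0 | rewrite /U /base q1; exact: subsetUl | exact: subsetT].
have qU : q <= #|U|.
  move: K0 => /set0Pn [z zK].
  have : #|z |: base [set: A] q| <= #|U|.
    by apply: subset_leq_card; rewrite subUset sub1set inE zK orbT subsetUl.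
  rewrite cardsU1 (Knb z zK) (base_card T0 Hq) cardsT; lia.
have [x [xD Cx]] := new_elem U0 Hq qU.
have xK : x \in K.
  by move: xD; rewrite !inE bU => /andP[xb]; rewrite (negbTE xb).
have [w wK ewx] := Hpred x xK.
have wx : w != x by exact: erel_neq ewx.
apply: (erel_asym Hq ewx).
apply: (erel_intro U0 Hq).
- by rewrite Cx setU11.
- by move: xD; rewrite inE => /andP[].
- rewrite !inE Cx !inE negb_or wx bU (Knb w wK) /= wK orbT //.
Qed.

Lemma path_pred (e : rel A) y p z : path e y p -> z \in p ->
  exists2 w, w \in y :: p & e w z.
Proof.
elim: p y => [//|a p IH] y /= /andP[eya pa]; rewrite inE => /orP[/eqP ->|zp].
  by exists y; rewrite ?inE ?eqxx.
have [w wp ewz] := IH a pa zp.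
by exists w => //; rewrite inE wp orbT.
Qed.

Lemma no_cycle q x y : 0 < q <= #|A| -> erel q x y -> connect (erel q) y x -> False.
Proof.
move=> Hq exy /connectP [p pp xl].
apply: (acyc (K := [set z in y :: p]) Hq).
  by apply/set0Pn; exists y; rewrite inE inE eqxx.
move=> z; rewrite inE inE => /orP[/eqP ->|zp].
  by exists x => //; rewrite inE xl mem_last.
have [w wp ewz] := path_pred pp zp.
by exists w => //; rewrite inE.
Qed.

Definition hgt q x := #|[set z | connect (erel q) x z]|.
Definition key q x := hgt q x * #|A| + enum_rank x.
Definition rq q : rel A := fun x y => key q y <= key q x.

Lemma hgt_lt q x y : 0 < q <= #|A| -> erel q x y -> hgt q y < hgt q x.
Proof.
move=> Hq exy; apply: proper_card; apply/properP; split.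
  apply/subsetP => z; rewrite !inE; apply: connect_trans; exact: connect1.
exists x; first by rewrite inE connect0.
by rewrite inE; apply/negP => /(no_cycle Hq exy).
Qed.

Lemma key_lt q x y : 0 < q <= #|A| -> erel q x y -> key q y < key q x.
Proof.
move=> Hq exy; have := hgt_lt Hq exy; rewrite /key.
have := ltn_ord (enum_rank y); have := ltn_ord (enum_rank x).
set a := hgt q x; set b := hgt q y; set n := #|A|.
move=> _ ry ab.
have : (b + 1) * n <= a * n by rewrite leq_mul2r; apply/orP; right; lia.
lia.
Qed.

Lemma key_inj q x y : key q x = key q y -> x = y.
Proof.
rewrite /key => e.
have : (hgt q x * #|A| + enum_rank x) %% #|A| = (hgt q y * #|A| + enum_rank y) %% #|A|.
  by rewrite e.
rewrite !modnMDl !modn_small ?ltn_ord // => e'.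
by apply: enum_rank_inj; apply: val_inj.
Qed.

Lemma rq_pri q : priority (rq q).
Proof.
split.
- by move=> x y; rewrite /rq leq_total.
- by move=> x y z; rewrite /rq => h1 h2; apply: leq_trans h2 h1.
- by move=> x y; rewrite /rq => h1 h2; apply: (@key_inj q); apply/eqP; rewrite eqn_leq h2 h1.
Qed.

Lemma step_ok S q : S != set0 -> 0 < q <= #|A| ->
  C S q = lex_step (rq q) S (base S q).
Proof.
move=> S0 Hq.
case: (leqP q #|S|) => qS.
  have [x [xD Cx]] := new_elem S0 Hq qS.
  case: (lex_stepP S (base S q) (rq_pri q)) => [[e _]|[z [zD zmax ->]]].
    by move: xD; rewrite e inE.
  rewrite Cx; congr (_ |: _).
  apply/eqP; apply: contraT => zx.
  have exz : erel q x z.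
    apply: (erel_intro S0 Hq); first by rewrite Cx setU11.
      by move: xD; rewrite inE => /andP[].
    by move: zD; rewrite !inE => /andP[zb zS]; rewrite Cx !inE eq_sym (negbTE zx) (negbTE zb) zS.
  have := key_lt Hq exz; have := zmax x xD; rewrite /rq leqNgt => /negP; done.
have [e Cb] := small S0 Hq qS.
case: (lex_stepP S (base S q) (rq_pri q)) => [[_ ->]|[z [zD _ _]]] //.
by move: zD; rewrite e inE.
Qed.

Definition Pconv : profile A := fun i => rq (nat_of_ord i).+1.

Lemma Pconv_at k : k < #|A| -> prof_at Pconv k = rq k.+1.
Proof. by move=> kn; rewrite /prof_at insubT. Qed.

Lemma conv_lex : lexicographic C.
Proof.
exists Pconv; split; first by move=> i; apply: rq_pri.
move=> S q S0; elim: q => [//|q IH] /andP[_ qn].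
have Hq : 0 < q.+1 <= #|A| by rewrite qn.
rewrite /= Pconv_at // (step_ok S0 Hq); congr lex_step.
case: q IH qn Hq => [|q] IH qn Hq //=.
by rewrite /base /= IH // (ltnW qn).
Qed.

End Converse.

Theorem corollary1 (A : finType) (C : {set A} -> nat -> {set A}) :
  0 < #|A| ->
  choice_rule C ->
  (lexicographic C <->
   [/\ capacity_filling C, gross_substitutes C, monotonicity C & CWARP C]).
Proof.
move=> hn hC; split.
  move=> [P [hP hL]]; split.
  - exact: fwd_cf hP hL.
  - exact: fwd_gs hP hL.
  - exact: fwd_mono hL.
  - exact: fwd_cwarp hP hL.
by move=> [hCF hGS hM hW]; apply: conv_lex.
Qed.
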